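(* Let $X\subseteq\{1,\dots,n\}$ and $x\in X$. Let $D(X,x)$ be the complex with \[ D(X,x)_i=\bigoplus_{(x_0,\dots,x_i)}\mathcal M_{X,\{x,x_0,\dots,x_i\}}\qquad(i\geq 0), \] the sum over all tuples of distinct elements of $X-\{x\}$, whose differential $\delta_i$ (for $i\geq 1$) sends the $(x_0,\dots,x_i)$-summand to the $(x_0,\dots,x_{i-1})$-summand via the map $\mathcal M_{X,\{x,x_0,\dots,x_i\}}\to\mathcal M_{X,\{x,x_0,\dots,x_{i-1}\}}$ induced by the inclusions $M_{\{x,x_0,\dots,x_i\}}\subseteq M_{\{x,x_0,\dots,x_{i-1}\}}$ and $J_{X-\{x,x_0,\dots,x_i\}}\subseteq J_{X-\{x,x_0,\dots,x_{i-1}\}}$, and with augmentation $\delta_0\colon D(X,x)_0\to\mathcal B_{X,x}$ induced on each summand by $M_{\{x,x_0\}}\subseteq B_{X,x}$ and $J_{X-\{x,x_0\}}\subseteq J_{X-\{x\}}$. Then $D(X,x)\to\mathcal B_{X,x}$ is a resolution, and so is $\mathbb 1\otimes_{\mathcal P_n}D(X,x)\to\mathbb 1\otimes_{\mathcal P_n}\mathcal B_{X,x}$.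
   Context: $R$ is a commutative ring, $\delta\in R$, and $\mathcal P_n=\mathcal P_n(R,\delta)$ is the partition algebra: the free $R$-module on set partitions (''diagrams'') of $\{-n,\dots,-1,1,\dots,n\}$ (negative = left nodes, positive = right nodes), with product by stacking, taking the induced partition on outer nodes, and multiplying by $\delta$ for each component consisting only of middle nodes. $\mathbb 1$ is the trivial right module $R$ on which permutation diagrams (blocks all of the form $\{-i,j\}$) act as the identity and other diagrams as $0$. For $Z\subseteq\{1,\dots,n\}$, $J_Z$ is the left ideal spanned by diagrams in which among the right nodes labelled by $Z$ there is a singleton block or two distinct nodes in the same block. $B_{X,x}$ is the left submodule spanned by diagrams in which the right node $x$ lies in the same block as some other element of $X$, and $\mathcal B_{X,x}=B_{X,x}/(B_{X,x}\cap J_{X-\{x\}})$. For $Y\subseteq X$, $M_Y$ is the span of diagrams in which all right nodes in $Y$ lie in one block, and $\mathcal M_{X,Y}=M_Y/(M_Y\cap J_{X-Y})$. *)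

(* Defs.v *)
From HB Require Import structures.
From mathcomp Require Import all_boot all_order all_algebra.
Set Implicit Arguments. Unset Strict Implicit. Unset Printing Implicit Defensive.
Import GRing.Theory.
Local Open Scope ring_scope.

(** * Diagrams of the partition algebra P_n.
    Nodes: [inl i] is the left node -(i+1), [inr i] is the right node (i+1),
    for i : 'I_n.  So {1,...,n} is represented by 'I_n (shift by one). *)
Definition node (n : nat) := ('I_n + 'I_n)%type.

Definition is_diagram n (P : {set {set node n}}) : bool := partition P [set: node n].

Definition diagram n := {P : {set {set node n}} | is_diagram P}.

Definition sameblk n (d : diagram n) (a b : node n) : bool :=
  [exists B in val d, (a \in B) && (b \in B)].

(** In [comp d1 d2] the right nodes of d1 are glued to the left
    nodes of d2 ("middle" nodes); the outer nodes are the left nodes of d1 and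
    the right nodes of d2.  Auxiliary node type: (0,i) outer-left, (1,i) middle,
    (2,i) outer-right. *)
Definition tnode n := ('I_3 * 'I_n)%type.
Definition p0 : 'I_3 := @Ordinal 3 0 isT.
Definition p1 : 'I_3 := @Ordinal 3 1 isT.
Definition p2 : 'I_3 := @Ordinal 3 2 isT.

Definition emb1 n (a : node n) : tnode n :=
  match a with inl i => (p0, i) | inr i => (p1, i) end.
Definition emb2 n (a : node n) : tnode n :=
  match a with inl i => (p1, i) | inr i => (p2, i) end.
Definition outer n (a : node n) : tnode n :=
  match a with inl i => (p0, i) | inr i => (p2, i) end.

Definition glue0 n (d1 d2 : diagram n) (u v : tnode n) : bool :=
  [exists a, exists b, [&& sameblk d1 a b, emb1 a == u & emb1 b == v]] ||
  [exists a, exists b, [&& sameblk d2 a b, emb2 a == u & emb2 b == v]].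
Definition glue n (d1 d2 : diagram n) : rel (tnode n) :=
  fun u v => glue0 d1 d2 u v || glue0 d1 d2 v u.
Definition conn n (d1 d2 : diagram n) : rel (tnode n) := connect (glue d1 d2).

Definition orel n (d1 d2 : diagram n) : rel (node n) :=
  fun w w' => conn d1 d2 (outer w) (outer w').

Lemma glue_sym n (d1 d2 : diagram n) : symmetric (glue d1 d2).
Proof. by move=> u v; rewrite /glue orbC. Qed.

Lemma orel_equiv n (d1 d2 : diagram n) :
  {in [set: node n] & &, equivalence_rel (orel d1 d2)}.
Proof.
move=> x y z _ _ _; split; first exact: connect0.
have sym := sym_connect_sym (glue_sym d1 d2).
move=> xy; apply/idP/idP => H.
- by apply: connect_trans H; rewrite /conn sym.
- exact: connect_trans xy H.
Qed.

Definition comp_set n (d1 d2 : diagram n) : {set {set node n}} :=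
  equivalence_partition (orel d1 d2) [set: node n].

Lemma comp_is_diagram n (d1 d2 : diagram n) : is_diagram (comp_set d1 d2).
Proof. exact: (equivalence_partitionP (orel_equiv d1 d2)). Qed.

Definition comp n (d1 d2 : diagram n) : diagram n :=
  exist _ (comp_set d1 d2) (comp_is_diagram d1 d2).

(** number of components of the stacked picture consisting only of middle nodes *)
Definition mid n (d1 d2 : diagram n) : nat :=
  #|[set [set v | conn d1 d2 m v] | m in
      [set m : tnode n | (m.1 == p1) && [forall w, ~~ conn d1 d2 m (outer w)]]]|.

(** ** The partition algebra as the free R-module on diagrams *)
Notation palg R n := {ffun diagram n -> R}.

Definition pscale (R : pzRingType) n (r : R) (v : palg R n) : palg R n :=
  [ffun d => r * v d].

(** left multiplication by the diagram d:  d * d2 = delta^(mid) (d o d2) *)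
Definition dact (R : pzRingType) (delta : R) n (d : diagram n) (v : palg R n)
  : palg R n :=
  [ffun d' => \sum_(d2 : diagram n | comp d d2 == d') v d2 * delta ^+ mid d d2].

Definition is_perm n (d : diagram n) : bool :=
  [forall B in val d, [exists i, exists j, B == [set inl i; inr j]]].

(** the trivial module 1: permutation diagrams act by 1, others by 0 *)
Definition eps (R : pzRingType) n (d : diagram n) : R := (is_perm d)%:R.

Definition Jset n (Z : {set 'I_n}) (d : diagram n) : bool :=
  [exists B in val d,
     [exists z in Z, B == [set inr z]] ||
     [exists z1 in Z, exists z2 in Z, [&& z1 != z2, inr z1 \in B & inr z2 \in B]]].

Definition Bset n (X : {set 'I_n}) (x : 'I_n) (d : diagram n) : bool :=
  [exists B in val d, (inr x \in B) && [exists y in X, (y != x) && (inr y \in B)]].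

Definition Mset n (Y : {set 'I_n}) (d : diagram n) : bool :=
  [exists B in val d, [forall y in Y, inr y \in B]].

(** R-span of a set of diagrams (= elements supported on that set) *)
Definition spanD (R : pzRingType) n (P : pred (diagram n)) (v : palg R n) : Prop :=
  forall d, v d != 0 -> P d.

(** ** Subquotients  top / ker  of P_n (ker is a submodule of top) *)
Record subquot (R : pzRingType) n := SubQuot {
  sq_top : palg R n -> Prop;
  sq_ker : palg R n -> Prop }.

(** M_{X,Y} = M_Y / (M_Y cap J_{X-Y}) *)
Definition MX (R : pzRingType) n (X Y : {set 'I_n}) : subquot R n :=
  SubQuot (spanD (Mset Y))
          (fun v => spanD (Mset Y) v /\ spanD (Jset (X :\: Y)) v).

(** B_{X,x} = B_{X,x} / (B_{X,x} cap J_{X-{x}}) *)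
Definition BX (R : pzRingType) n (X : {set 'I_n}) (x : 'I_n) : subquot R n :=
  SubQuot (spanD (Bset X x))
          (fun v => spanD (Bset X x) v /\ spanD (Jset (X :\ x)) v).

(** balancing relations of 1 (x)_{P_n} M:  sums of  d.m - eps(d) m, m in M *)
Definition Trel (R : pzRingType) (delta : R) n (M : palg R n -> Prop)
  (v : palg R n) : Prop :=
  exists s : seq (diagram n * palg R n),
    (forall p, p \in s -> M p.2) /\
    v = \sum_(p <- s) (dact delta p.1 p.2 - pscale (eps R p.1) p.2).

(** 1 (x)_{P_n} (top/ker) = top / (ker + balancing relations) *)
Definition tensor1 (R : pzRingType) (delta : R) n (Q : subquot R n) : subquot R n :=
  SubQuot (sq_top Q)
          (fun v => exists j k, sq_ker Q j /\ Trel delta (sq_top Q) k /\ v = j + k).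

(** A tuple s = (x_0,...,x_i) of distinct elements of X-{x} of size i+1 indexes
   a summand M_{X,{x,x_0..x_i}} of D(X,x)_i; the empty tuple indexes the
   augmentation target B_{X,x} (degree -1). *)
Definition valid n (X : {set 'I_n}) (x : 'I_n) (s : seq 'I_n) : bool :=
  uniq s && all (fun y => (y \in X) && (y != x)) s.

Definition Dsummand (R : pzRingType) n (X : {set 'I_n}) (x : 'I_n) (s : seq 'I_n)
  : subquot R n :=
  if s is [::] then BX R X x else MX R X (x |: [set y in s]).

(** differential (and augmentation, for s = [::]): the (s ++ [y])-summand is
    sent to the s-summand by the map induced by the identity of P_n *)
Definition dF (R : pzRingType) n (X : {set 'I_n}) (x : 'I_n)
  (f : seq 'I_n -> palg R n) (s : seq 'I_n) : palg R n :=
  \sum_(y : 'I_n | [&& y \in X, y != x & y \notin s]) f (rcons s y).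

(** elements of the k-th term (k = size of indexing tuples) of the augmented
    complex: an element of the direct sum, given by representatives *)
Definition chain (R : pzRingType) n (X : {set 'I_n}) (x : 'I_n)
  (S : seq 'I_n -> subquot R n) (k : nat) (f : seq 'I_n -> palg R n) : Prop :=
  (forall t, valid X x t -> size t = k -> sq_top (S t) (f t)) /\
  (forall t, ~~ (valid X x t && (size t == k)) -> f t = 0).

(** exactness of the augmented complex at every spot (including surjectivity
    of the augmentation, k = 0) *)
Definition aug_exact (R : pzRingType) n (X : {set 'I_n}) (x : 'I_n)
  (S : seq 'I_n -> subquot R n) : Prop :=
  forall (k : nat) (f : seq 'I_n -> palg R n),
    chain X x S k f ->
    (forall s, valid X x s -> (size s).+1 = k -> sq_ker (S s) (dF X x f s)) ->
    exists g, chain X x S k.+1 g /\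
      (forall t, valid X x t -> size t = k -> sq_ker (S t) (f t - dF X x g t)).

(* Main.v *)
Require Import Defs.
From HB Require Import structures.
From mathcomp Require Import all_boot all_order all_algebra.
Import Defs.
Set Implicit Arguments. Unset Strict Implicit. Unset Printing Implicit Defensive.
Import GRing.Theory.

Section Basic.
Variable n : nat.
Implicit Types d u m : diagram n.

Lemma dpart d : partition (val d) [set: node n].
Proof. exact: (valP d). Qed.

Lemma dtriv d : trivIset (val d).
Proof. exact: partition_trivIset (dpart d). Qed.

Lemma dcov d a : a \in cover (val d).
Proof. by rewrite (cover_partition (dpart d)) inE. Qed.

Lemma sameblkE d a b : sameblk d a b = (b \in pblock (val d) a).
Proof.
apply/existsP/idP => [[B /and3P[PB aB bB]]|H].
  by rewrite (def_pblock (dtriv d) PB aB).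
exists (pblock (val d) a); by rewrite pblock_mem ?dcov //= H andbT mem_pblock dcov.
Qed.

Lemma sb_refl d a : sameblk d a a.
Proof. by rewrite sameblkE mem_pblock dcov. Qed.

Lemma sb_sym d a b : sameblk d a b = sameblk d b a.
Proof.
rewrite !sameblkE -!eq_pblock ?dcov ?dtriv //; exact: eq_sym.
Qed.

Lemma sb_trans d a b c : sameblk d a b -> sameblk d b c -> sameblk d a c.
Proof.
rewrite !sameblkE -!eq_pblock ?dcov ?dtriv // => /eqP-> //.
Qed.

Lemma sb_equiv d : {in [set: node n] & &, equivalence_rel (sameblk d)}.
Proof.
move=> a b c _ _ _; split; first exact: sb_refl.
move=> ab; apply/idP/idP => H; last exact: sb_trans ab H.
by apply: sb_trans H; rewrite sb_sym.
Qed.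

Lemma val_pblock_eq d : equivalence_partition (sameblk d) [set: node n] = val d.
Proof.
rewrite -[RHS](equivalence_partition_pblock (dpart d)).
rewrite /equivalence_partition; apply: eq_imset => a; apply/setP => b.
by rewrite !inE sameblkE.
Qed.

Definition mkdiag (r : rel (node n))
  (H : {in [set: node n] & &, equivalence_rel r}) : diagram n :=
  exist _ (equivalence_partition r [set: node n]) (equivalence_partitionP H).

Lemma sb_mkdiag r H a b : sameblk (@mkdiag r H) a b = r a b.
Proof.
rewrite sameblkE /=. exact: pblock_equivalence_partition.
Qed.

Lemma conn_sym u m : connect_sym (glue u m).
Proof. exact: sym_connect_sym (glue_sym u m). Qed.

Lemma glue1 u m a b : sameblk u a b -> glue u m (emb1 a) (emb1 b).
Proof.
move=> H; apply/orP; left; apply/orP; left; apply/existsP; exists a;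
 apply/existsP; exists b; by rewrite H !eqxx.
Qed.

Lemma glue2 u m a b : sameblk m a b -> glue u m (emb2 a) (emb2 b).
Proof.
move=> H; apply/orP; left; apply/orP; right; apply/existsP; exists a;
 apply/existsP; exists b; by rewrite H !eqxx.
Qed.

Lemma conn_inv u m d (phi : tnode n -> node n) :
  (forall a b, sameblk u a b -> sameblk d (phi (emb1 a)) (phi (emb1 b))) ->
  (forall a b, sameblk m a b -> sameblk d (phi (emb2 a)) (phi (emb2 b))) ->
  forall s t, conn u m s t -> sameblk d (phi s) (phi t).
Proof.
move=> H1 H2 s t /connectP[p]; elim: p s => [|v p IH] s /=.
  by move=> _ ->; exact: sb_refl.
case/andP => e pth lst; apply: sb_trans (IH _ pth lst).
have g0 : forall a b, glue0 u m a b -> sameblk d (phi a) (phi b).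
  move=> a b /orP[/existsP[a' /existsP[b' /and3P[H /eqP<- /eqP<-]]]
                 |/existsP[a' /existsP[b' /and3P[H /eqP<- /eqP<-]]]].
    exact: H1. exact: H2.
case/orP: e => [/g0 //|/g0]; by rewrite sb_sym.
Qed.

Lemma comp_eq u m d (phi : tnode n -> node n) :
  (forall a b, sameblk u a b -> sameblk d (phi (emb1 a)) (phi (emb1 b))) ->
  (forall a b, sameblk m a b -> sameblk d (phi (emb2 a)) (phi (emb2 b))) ->
  (forall w, phi (outer w) = w) ->
  (forall w w', sameblk d w w' -> conn u m (outer w) (outer w')) ->
  comp u m = d.
Proof.
move=> H1 H2 H3 H4; apply: val_inj => /=.
rewrite /comp_set -val_pblock_eq /equivalence_partition.
apply: eq_imset => a; apply/setP => b; rewrite !inE.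
apply/idP/idP => [/(conn_inv H1 H2)|/H4 //]; by rewrite !H3.
Qed.

Lemma mid0 u m :
  (forall i, exists w, conn u m (p1, i) (outer w)) -> mid u m = 0%N.
Proof.
move=> H; apply/eqP; rewrite cards_eq0 imset_eq0; apply/eqP/setP => [[q i]].
rewrite !inE /=.
have [->|] := eqVneq q p1; rewrite ?andbF //= ?andTb.
by have [w Hw] := H i; apply/negP => /forallP /(_ w); rewrite Hw.
Qed.

End Basic.


Section Fact.
Variable n : nat.
Implicit Types d u m : diagram n.

Definition idx (a : node n) : 'I_n := match a with inl i => i | inr i => i end.

Lemma sb_equiv_f d (f : node n -> node n) :
  {in [set: node n] & &, equivalence_rel (fun a b => sameblk d (f a) (f b))}.
Proof. by move=> a b c _ _ _; apply: (sb_equiv d); rewrite inE. Qed.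

Lemma nonperm u :
  (exists i j, i != j /\ sameblk u (inl i) (inl j)) \/
  (exists i, forall b, ~~ sameblk u (inl i) (inr b)) -> ~~ is_perm u.
Proof.
move=> H; apply/negP => /forallP P.
have [i Hi] : exists i, (exists j, i != j /\ sameblk u (inl i) (inl j)) \/
                        (forall b, ~~ sameblk u (inl i) (inr b)).
  case: H => [[i [j Hj]]|[i Hi]]; exists i; [left; exists j|right] => //.
have /implyP/(_ (pblock_mem (dcov u (inl i))))/existsP[a /existsP[b /eqP E]] :=
  P (pblock (val u) (inl i)).
have Hii : (inl i : node n) \in pblock (val u) (inl i) by rewrite mem_pblock dcov.
case: Hi => [[j [ij Hj]]|Hb].
  rewrite sameblkE E in Hj; rewrite E in Hii.
  move: Hj Hii; rewrite !inE => /orP[/eqP[e1]|//] /orP[/eqP[e2]|//].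
  by rewrite e1 e2 eqxx in ij.
by have := Hb b; rewrite sameblkE E !inE eqxx orbT.
Qed.

Lemma conn_e1 u m a b : sameblk u a b -> conn u m (emb1 a) (emb1 b).
Proof. by move=> H; apply: connect1; apply: glue1. Qed.
Lemma conn_e2 u m a b : sameblk m a b -> conn u m (emb2 a) (emb2 b).
Proof. by move=> H; apply: connect1; apply: glue2. Qed.
Lemma conn_tr u m a b c : conn u m a b -> conn u m b c -> conn u m a c.
Proof. exact: connect_trans. Qed.
Lemma conn_sy u m a b : conn u m a b = conn u m b a.
Proof. exact: conn_sym. Qed.

Definition phiA (t : tnode n) : node n := if t.1 == p2 then inr t.2 else inl t.2.

Lemma factorA d i j : i != j -> sameblk d (inl i) (inl j) ->
  exists u, [/\ ~~ is_perm u, comp u d = d & mid u d = 0%N].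
Proof.
move=> ij Hij.
pose r := fun a b => sameblk d (inl (idx a)) (inl (idx b)).
pose u := mkdiag (sb_equiv_f d (fun a => inl (idx a))).
have su : forall a b, sameblk u a b = r a b by move=> a b; rewrite sb_mkdiag.
exists u; split.
- by apply: nonperm; left; exists i, j; rewrite su.
- apply: (@comp_eq _ _ _ _ phiA).
  + by move=> [a|a] [b|b]; rewrite su.
  + by move=> [a|a] [b|b].
  + by move=> [a|a].
  + move=> [a|a] [b|b] H.
    * by have := @conn_e1 u d (inl a) (inl b); rewrite su; apply.
    * apply: (@conn_tr _ _ _ (p1, a)).
        by have := @conn_e1 u d (inl a) (inr a); rewrite su /r /= sb_refl; apply.
      by have := @conn_e2 u d (inl a) (inr b); apply.
    * rewrite conn_sy; apply: (@conn_tr _ _ _ (p1, b)).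
        by have := @conn_e1 u d (inl b) (inr b); rewrite su /r /= sb_refl; apply.
      by have := @conn_e2 u d (inl b) (inr a); rewrite sb_sym; apply.
    * by have := @conn_e2 u d (inr a) (inr b); apply.
- apply: mid0 => k; exists (inl k); rewrite conn_sy.
  by have := @conn_e1 u d (inl k) (inr k); rewrite su /r /= sb_refl; apply.
Qed.


Definition ruB (i : 'I_n) (a b : node n) : bool :=
  (a == b) || ((idx a == idx b) && (idx a != i)).

Lemma ruB_equiv i : {in [set: node n] & &, equivalence_rel (ruB i)}.
Proof.
move=> a b c _ _ _; rewrite /ruB; split; first by rewrite eqxx.
move=> /orP[/eqP<-//|/andP[/eqP e1 n1]].
apply/idP/idP => /orP[/eqP<-|/andP[/eqP e2 n2]];
  rewrite ?eqxx ?orbT //; apply/orP; right; apply/andP; split;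
  try (apply/eqP; congruence); by rewrite -?e1 ?n1.
Qed.

Definition psiB (i j : 'I_n) (w : node n) : node n :=
  if w == inl i then inl j else w.

Definition phiB (i j : 'I_n) (t : tnode n) : node n :=
  if t.1 == p0 then inl t.2 else if t.1 == p1 then psiB i j (inl t.2)
  else inr t.2.

Lemma factorB d i j : i != j -> (forall w, sameblk d (inl i) w -> w = inl i) ->
  exists u m, [/\ ~~ is_perm u, comp u m = d, mid u m = 0%N &
      forall a b, sameblk m (inr a) (inr b) = sameblk d (inr a) (inr b)].
Proof.
move=> ij Hi.
pose u := mkdiag (@ruB_equiv i).
pose m := mkdiag (sb_equiv_f d (psiB i j)).
have su : forall a b, sameblk u a b = ruB i a b by move=> a b; rewrite sb_mkdiag.
have sm : forall a b, sameblk m a b = sameblk d (psiB i j a) (psiB i j b).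
  by move=> a b; rewrite sb_mkdiag.
have psiE : forall k, k != i -> psiB i j (inl k) = inl k.
  by move=> k ki; rewrite /psiB; case: eqP => // [[e]]; rewrite e eqxx in ki.
have psiR : forall k, psiB i j (inr k) = inr k by [].
have ji : j != i by rewrite eq_sym.
have uK : forall k, k != i -> conn u m (p0, k) (p1, k).
  by move=> k ki; have := @conn_e1 u m (inl k) (inr k); rewrite su /ruB /= ki andbT; apply.
exists u, m; split.
- apply: nonperm; right; exists i => b; rewrite su /ruB /= eqxx andbF.
  by [].
- apply: (@comp_eq _ _ _ _ (phiB i j)).
  + move=> a b; rewrite su /ruB => /orP[/eqP->|/andP[/eqP e nb]]; first exact: sb_refl.
    move: a b e nb => [a|a] [b|b] /= e nb; rewrite /phiB /= ?psiE -?e //;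
      exact: sb_refl.
  + by move=> [a|a] [b|b]; rewrite sm.
  + by move=> [a|a].
  + have key : forall a w, sameblk d (inl a) w -> conn u m (outer (inl a)) (outer w).
      move=> a w H; have [ai|ai] := eqVneq a i.
        by subst a; rewrite (Hi _ H); apply: connect0.
      apply: (conn_tr (uK a ai)); case: w H => [b|b] H.
      * have bi : b != i.
          apply/eqP => e; subst b; have := Hi (inl a); rewrite sb_sym => /(_ H) [e].
          by rewrite e eqxx in ai.
        apply: (@conn_tr _ _ _ (p1, b)); last by rewrite conn_sy; apply: uK.
        by have := @conn_e2 u m (inl a) (inl b); rewrite sm !psiE //; apply.
      * by have := @conn_e2 u m (inl a) (inr b); rewrite sm psiE //; apply.
    move=> [a|a] w H; first exact: key.
    case: w H => [b|b] H.
    * by rewrite conn_sy; apply: key; rewrite sb_sym.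
    * by have := @conn_e2 u m (inr a) (inr b); rewrite sm; apply.
- apply: mid0 => k; have [ki|ki] := eqVneq k i.
    subst k; exists (inl j); apply: (@conn_tr _ _ _ (p1, j)).
      by have := @conn_e2 u m (inl i) (inl j); rewrite sm /psiB eqxx; case: eqP => [[e]|_]; [rewrite e eqxx in ij | rewrite sb_refl; apply].
    by rewrite conn_sy; apply: uK.
  by exists (inl k); rewrite conn_sy; apply: uK.
- by move=> a b; rewrite sm.
Qed.

Lemma factor d y1 y2 : y1 != y2 -> sameblk d (inr y1) (inr y2) ->
  exists u m, [/\ ~~ is_perm u, comp u m = d, mid u m = 0%N &
      forall a b, sameblk m (inr a) (inr b) = sameblk d (inr a) (inr b)].
Proof.
move=> y12 Hy.
have [[i [j [ij Hij]]]|noA] :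
    (exists i j, i != j /\ sameblk d (inl i) (inl j)) \/
    (forall i j, sameblk d (inl i) (inl j) -> i = j).
  case: (boolP [exists i, exists j, (i != j) && sameblk d (inl i) (inl j)]).
    by move=> /existsP[i /existsP[j /andP[a b]]]; left; exists i, j.
  move=> H; right => i j Hij; apply/eqP; apply: contraNT H => ij.
  by apply/existsP; exists i; apply/existsP; exists j; rewrite ij.
  have [u [? ? ?]] := factorA ij Hij; exists u, d; split => //.
case: (boolP [exists i, [forall b, ~~ sameblk d (inl i) (inr b)]]).
  move=> /existsP[i /forallP Hb].
  pose j := if i == y1 then y2 else y1.
  have ij : i != j by rewrite /j; have [->|ne] := eqVneq i y1; rewrite // eq_sym.
  apply: (factorB ij) => [[k|k]] H.
    by rewrite (noA _ _ H).
  by have := Hb k; rewrite H.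
rewrite negb_exists => /forallP Hall.
have Hf : forall i, sameblk d (inl i) (inr (odflt i [pick b | sameblk d (inl i) (inr b)])).
  move=> i; case: pickP => // H0.
  by have := Hall i; rewrite negb_forall => /existsP[b]; rewrite negbK H0.
pose f i := odflt i [pick b | sameblk d (inl i) (inr b)].
have finj : injective f.
  move=> a b e; apply: noA; apply: sb_trans (Hf a) _.
  by move: e; rewrite /f => ->; rewrite sb_sym; apply: Hf.
have [g fg gf] := injF_bij finj.
have := Hf (g y1); have := Hf (g y2); rewrite -/(f _) -/(f _) !gf => H2 H1.
have e : g y1 = g y2.
  apply: noA; apply: sb_trans H1 _; apply: sb_trans Hy _; by rewrite sb_sym.
by have := congr1 f e; rewrite !gf => e'; rewrite e' eqxx in y12.
Qed.

End Fact.


Section Tens.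
Local Open Scope ring_scope.
Variables (R : pzRingType) (delta : R) (n : nat).

Definition ed (m : diagram n) : palg R n := [ffun d' => (d' == m)%:R].

Lemma dact_ed u m d c : comp u m = d -> mid u m = 0%N ->
  dact delta u (pscale c (ed m)) = pscale c (ed d).
Proof.
move=> cE mE; apply/ffunP => d'; rewrite !ffunE.
rewrite big_mkcond (bigD1 m) //= big1 => [|d2 nd2].
  by rewrite !ffunE eqxx cE mE expr0 mulr1 addr0 mulr1 eq_sym; case: eqP; rewrite ?mulr0 ?mulr1.
by rewrite !ffunE (negbTE nd2) mulr0 mul0r; case: ifP.
Qed.

Lemma Trel0 (M : palg R n -> Prop) : Trel delta M 0.
Proof. by exists [::]; split => //; rewrite big_nil. Qed.

Lemma TrelD (M : palg R n -> Prop) a b :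
  Trel delta M a -> Trel delta M b -> Trel delta M (a + b).
Proof.
move=> [s1 [H1 ->]] [s2 [H2 ->]]; exists (s1 ++ s2); split; last by rewrite big_cat.
by move=> p; rewrite mem_cat => /orP[/H1|/H2].
Qed.

Lemma pscale0 (v : palg R n) : pscale 0 v = 0.
Proof. by apply/ffunP => d; rewrite !ffunE mul0r. Qed.

Lemma eps_nonperm (u : diagram n) : ~~ is_perm u -> eps R u = 0.
Proof. by rewrite /eps => /negbTE->. Qed.

Lemma Trel_all (P : pred (diagram n)) v :
  (forall d, P d -> exists y1 y2, y1 != y2 /\ sameblk d (inr y1) (inr y2)) ->
  (forall d d', (forall a b, sameblk d' (inr a) (inr b) = sameblk d (inr a) (inr b)) ->
     P d -> P d') ->
  spanD P v -> Trel delta (spanD P) v.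
Proof.
move=> HP HPr Hv.
have -> : v = \sum_(d : diagram n) pscale (v d) (ed d).
  apply/ffunP => d'; rewrite sum_ffunE (bigD1 d') //= big1 => [|d2 nd2].
    by rewrite !ffunE eqxx mulr1 addr0.
  by rewrite !ffunE eq_sym (negbTE nd2) mulr0.
apply: (big_ind (Trel delta (spanD P))); [exact: Trel0|exact: TrelD|].
move=> d _; have [vd0|vd] := eqVneq (v d) 0.
  by rewrite vd0 pscale0; exact: Trel0.
have [y1 [y2 [y12 Hy]]] := HP d (Hv d vd).
have [u [m [np cE mE Hr]]] := factor y12 Hy.
exists [:: (u, pscale (v d) (ed m))]; split.
  move=> p; rewrite inE => /eqP-> /= d2; rewrite !ffunE.
  have [->|] := eqVneq d2 m; last by rewrite mulr0 eqxx.
  by move=> _; apply: (HPr d m Hr); apply: Hv.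
by rewrite big_seq1 /= (dact_ed _ cE mE) eps_nonperm // pscale0 subr0.
Qed.

End Tens.


Section Main.
Local Open Scope ring_scope.
Variables (R : comPzRingType) (delta : R) (n : nat) (X : {set 'I_n}) (x : 'I_n).
Hypothesis Hx : x \in X.

Definition inB (d : diagram n) (y : 'I_n) := sameblk d (inr x) (inr y).

Definition topP (t : seq 'I_n) (d : diagram n) : bool :=
  if t is [::] then Bset X x d else Mset (x |: [set y in t]) d.

Definition Zs (t : seq 'I_n) := X :\: (x |: [set y in t]).

Lemma L_top t v : sq_top (Dsummand R X x t) v <-> spanD (topP t) v.
Proof. by case: t. Qed.

Lemma L_ker t v : sq_ker (Dsummand R X x t) v <->
  spanD (topP t) v /\ spanD (Jset (Zs t)) v.
Proof.
case: t => //=; rewrite /Zs.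
have -> : X :\: (x |: [set y in [::]]) = X :\ x.
  by apply/setP => z; rewrite !inE orbF.
by [].
Qed.

Lemma blk_inB (d : diagram n) B z : B \in val d -> inr x \in B -> inr z \in B -> inB d z.
Proof. by move=> PB xB zB; apply/existsP; exists B; rewrite PB xB zB. Qed.

Lemma inB_blk (d : diagram n) B w : B \in val d -> inr w \in B -> inB d w -> inr x \in B.
Proof.
move=> PB wB; rewrite /inB sb_sym sameblkE.
by rewrite (def_pblock (dtriv d) PB wB).
Qed.

Lemma inB_pblock d z : inB d z = (inr z \in pblock (val d) (inr x)).
Proof. by rewrite /inB sameblkE. Qed.

Lemma Mset_inB (S : {set 'I_n}) d : Mset (x |: S) d = [forall y in S, inB d y].
Proof.
apply/existsP/forallP => [[B /andP[PB /forall_inP H]] y|H].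
  apply/implyP => yS; apply: (blk_inB PB); apply: H; rewrite !inE ?eqxx ?yS ?orbT //.
exists (pblock (val d) (inr x)); rewrite pblock_mem ?dcov //=.
apply/forall_inP => z; rewrite !inE => /orP[/eqP->|zS].
  by rewrite mem_pblock dcov.
by rewrite -inB_pblock; have := H z; rewrite zS.
Qed.

Lemma Bset_inB d : Bset X x d = [exists y, [&& y \in X, y != x & inB d y]].
Proof.
apply/existsP/existsP => [[B /and3P[PB xB /exists_inP[y yX /andP[yx yB]]]]|[y /and3P[yX yx yB]]].
  by exists y; rewrite yX yx (blk_inB PB).
exists (pblock (val d) (inr x)); rewrite pblock_mem ?dcov //= mem_pblock dcov /=.
by apply/exists_inP; exists y; rewrite // yx -inB_pblock.
Qed.

Lemma topP_allin t d : topP t d -> all (inB d) t.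
Proof.
case: t => //= a t; rewrite Mset_inB => /forall_inP H.
rewrite H ?inE ?eqxx //; apply/allP => z zt; apply: H; by rewrite !inE zt orbT.
Qed.

Lemma allin_topP t d : t != [::] -> all (inB d) t -> topP t d.
Proof.
case: t => //= a t _ H; rewrite Mset_inB; apply/forall_inP => z; rewrite inE => zt.
by have := allP (H : all (inB d) (a :: t)) z zt.
Qed.

Lemma Jset_pair (Z : {set 'I_n}) d z1 z2 : z1 != z2 -> z1 \in Z -> z2 \in Z ->
  inB d z1 -> inB d z2 -> Jset Z d.
Proof.
move=> z12 z1Z z2Z h1 h2; apply/existsP; exists (pblock (val d) (inr x)).
rewrite pblock_mem ?dcov //=; apply/orP; right.
apply/exists_inP; exists z1 => //; apply/exists_inP; exists z2 => //.
by rewrite z12 -!inB_pblock h1 h2.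
Qed.

Lemma Jset_shrink (Z : {set 'I_n}) w d : Jset Z d -> x \notin Z -> w \in Z -> inB d w ->
  (forall z, z \in Z -> inB d z -> z = w) -> Jset (Z :\ w) d.
Proof.
move=> /existsP[B /andP[PB H]] xZ wZ hw Hz; apply/existsP; exists B; rewrite PB /=.
case/orP: H => [/exists_inP[z zZ /eqP BE]|/exists_inP[z1 z1Z /exists_inP[z2 z2Z /and3P[z12 z1B z2B]]]].
  have [zw|zw] := eqVneq z w.
    subst z; have := inB_blk PB _ hw; rewrite BE !inE eqxx => /(_ isT) /eqP[e].
    by rewrite e wZ in xZ.
  by apply/orP; left; apply/exists_inP; exists z; rewrite ?inE ?zw ?BE.
have [e1|n1] := eqVneq z1 w.
  subst z1; have xB := inB_blk PB z1B hw.
  by have := Hz _ z2Z (blk_inB PB xB z2B) => e; rewrite e eqxx in z12.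
have [e2|n2] := eqVneq z2 w.
  subst z2; have xB := inB_blk PB z2B hw.
  by have := Hz _ z1Z (blk_inB PB xB z1B) => e; rewrite e eqxx in z12.
apply/orP; right; apply/exists_inP; exists z1; rewrite ?inE ?n1 //.
by apply/exists_inP; exists z2; rewrite ?inE ?n2 ?z12 ?z1B ?z2B // z2Z.
Qed.

Definition Aset (d : diagram n) := [set y in X | (y != x) && inB d y].

Lemma valid_rcons t y : valid X x t -> [&& y \in X, y != x & y \notin t] ->
  valid X x (rcons t y).
Proof.
rewrite /valid rcons_uniq all_rcons => /andP[u a] /and3P[yX yx yt].
by rewrite yt u yX yx a.
Qed.

Lemma sub_Aset t d : valid X x t -> all (inB d) t -> [set y in t] \subset Aset d.
Proof.
move=> /andP[_ /allP va] /allP ai; apply/subsetP => z; rewrite !inE => zt.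
by have /andP[-> ->] := va z zt; rewrite ai.
Qed.

Lemma card_set_t t : valid X x t -> #|[set y in t]| = size t.
Proof. by move=> /andP[u _]; rewrite cardsE; apply/card_uniqP. Qed.

Lemma part1 : aug_exact X x (Dsummand R X x).
Proof.
move=> k f [fT f0] fcyc.
pose g t : palg R n := [ffun d => if [&& valid X x t, size t == k.+1,
   all (inB d) t & #|Aset d| == k.+1] then f (take k t) d else 0].
exists g; split.
  split.
    move=> t vt st; apply/L_top => d; rewrite ffunE.
    case: ifP => [/and4P[_ _ al _] _|]; last by rewrite eqxx.
    by apply: allin_topP al; case: t vt st.
  move=> t ht; apply/ffunP => d; rewrite !ffunE.
  by case: ifP => // /and4P[a b _ _]; rewrite a b in ht.
move=> t vt st.
have dFg : forall d, (dF X x g t) d =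
    if all (inB d) t && (#|Aset d| == k.+1) then f t d else 0.
  move=> d; rewrite /dF sum_ffunE.
  have E : forall y, [&& y \in X, y != x & y \notin t] ->
      g (rcons t y) d = if all (inB d) t && (#|Aset d| == k.+1) && inB d y then f t d else 0.
    move=> y cy; rewrite ffunE valid_rcons // size_rcons st eqxx all_rcons /=.
    rewrite -cats1 -st take_size_cat //.
    by case: (inB d y); case: (all _ _); case: (_ == _).
  rewrite (eq_bigr _ (fun y cy => E y cy)).
  case: ifP => [/andP[al fu]|nc]; last by rewrite big1 // => y _; rewrite nc.
  rewrite -big_mkcondr /=.
  have sA := sub_Aset vt al.
  have : #|Aset d :\: [set y in t]| == 1%N.
    by rewrite cardsDS // card_set_t // st (eqP fu) subSnn.
  case/cards1P => w wE.
  rewrite (eq_bigl (fun y => y \in [set w])) ?big_set1 // => y.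
  rewrite -wE !inE.
  by case: (y \in X); case: (y == x); case: (y \in t); case: (inB d y).
apply/L_ker.
have key : forall d, (f t - dF X x g t) d != 0 ->
    topP t d /\ (f t - dF X x g t) d = f t d /\ ~~ (#|Aset d| == k.+1).
  move=> d; rewrite !ffunE dFg.
  case: ifP => [_|nc]; first by rewrite subrr eqxx.
  rewrite subr0 => nz; have tp := (proj1 (L_top t (f t)) (fT t vt st)) d nz.
  by move: nc; rewrite (topP_allin tp) /= => ->.
split => d nz; first by have [] := key d nz.
have [tp [dE nfull]] := key d nz.
have al := topP_allin tp; have sA := sub_Aset vt al.
have kle : (k <= #|Aset d|)%N by rewrite -st -card_set_t // subset_leq_card.
have [lt2|] := ltnP k.+1 #|Aset d|.
  have : (1 < #|Aset d :\: [set y in t]|)%N.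
    by rewrite cardsDS // card_set_t // st ltn_subRL addn1.
  case/card_gt1P => z1 [z2 [h1 h2 h12]].
  have zZ : forall z, z \in Aset d :\: [set y in t] -> (z \in Zs t) && inB d z.
    by move=> z; rewrite /Zs !inE; case: (z \in t); case: (z \in X); case: (z == x); case: (inB d z).
  have /andP[z1Z b1] := zZ _ h1; have /andP[z2Z b2] := zZ _ h2.
  exact: Jset_pair h12 z1Z z2Z b1 b2.
move=> kge.
have eqA : Aset d = [set y in t].
  apply/eqP; rewrite eq_sym eqEcard sA card_set_t // st /=.
  by rewrite -ltnS ltn_neqAle nfull kge.
have fz : f t d != 0 by rewrite -dE.
clear dFg key dE nz.
case/lastP: t vt st al sA eqA tp fz => [|s w] vt st al sA eqA tp fz.
  move: tp => /= /[!Bset_inB] /existsP[y /and3P[yX yx yB]].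
  have : y \in Aset d by rewrite !inE yX yx yB.
  by rewrite eqA inE.
move: (vt); rewrite /valid rcons_uniq all_rcons => /and3P[/andP[ws us] /andP[wX wx] ass].
have vs : valid X x s by rewrite /valid us ass.
have sk : (size s).+1 = k by rewrite -st size_rcons.
have [_ J] := proj1 (L_ker s (dF X x f s)) (fcyc s vs sk).
have cw : [&& w \in X, w != x & w \notin s] by rewrite wX wx ws.
have dfE : (dF X x f s) d = f (rcons s w) d.
  rewrite /dF sum_ffunE (bigD1 w) //= big1 ?addr0 // => y /andP[cy yw].
  have [//|nz'] := eqVneq (f (rcons s y) d) 0.
  have sy : size (rcons s y) = k by rewrite size_rcons.
  have tp' := (proj1 (L_top _ _) (fT _ (valid_rcons vs cy) sy)) d nz'.
  have := topP_allin tp'; rewrite all_rcons => /andP[iy _].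
  move: cy => /and3P[yX yx ys].
  have : y \in Aset d by rewrite !inE yX yx iy.
  by rewrite eqA inE mem_rcons inE (negbTE yw) /= (negbTE ys).
have Js : Jset (Zs s) d by apply: J; rewrite dfE.
have iw : inB d w by move: al; rewrite all_rcons => /andP[].
have := Jset_shrink Js _ _ iw.
have -> : Zs (rcons s w) = Zs s :\ w.
  by apply/setP => z; rewrite /Zs !inE mem_rcons inE; case: (z == w); case: (z == x); case: (z \in s).
apply; first by rewrite /Zs !inE eqxx.
  by rewrite /Zs !inE wX (negbTE wx) (negbTE ws).
move=> z; rewrite /Zs !inE => /andP[nz1 zX] iz.
have : z \in Aset d by rewrite !inE zX iz; move: nz1; case: (z == x).
rewrite eqA inE mem_rcons inE => /orP[/eqP //|zs].
by move: nz1; rewrite zs orbT.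
Qed.

Lemma top_eq t : sq_top (Dsummand R X x t) = spanD (topP t).
Proof. by case: t. Qed.

Lemma part2 : aug_exact X x (fun s => tensor1 delta (Dsummand R X x s)).
Proof.
move=> k f [fT f0] _; exists (fun _ => 0); split.
  split => t *; last by [].
  by rewrite /= top_eq => d; rewrite ffunE eqxx.
move=> t vt st /=; exists 0, (f t); split; last split.
- by apply/L_ker; split => d; rewrite ffunE eqxx.
- rewrite top_eq; apply: Trel_all.
  + move=> d; case: t vt st {fT} => [|a t] vt st.
      rewrite /= Bset_inB => /existsP[y /and3P[_ yx yB]].
      by exists x, y; rewrite eq_sym yx.
    move/topP_allin => /= /andP[aB _]; exists x, a; split => //.
    by move: vt => /andP[_ /= /andP[/andP[_ ax] _]]; rewrite eq_sym.
  + move=> d d' Hr; have iE : forall y, inB d' y = inB d y by move=> y; rewrite /inB Hr.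
    case: t {vt st fT} => [|a t] /=.
      rewrite !Bset_inB => /existsP[y /and3P[yX yx yB]]; apply/existsP; exists y.
      by rewrite yX yx iE.
    rewrite !Mset_inB => /forall_inP H; apply/forall_inP => y yt; rewrite iE; exact: H.
  + by have := fT t vt st; rewrite top_eq.
- rewrite /dF big1 ?subr0 ?add0r //.
Qed.

Lemma main : aug_exact X x (Dsummand R X x) /\
  aug_exact X x (fun s => tensor1 delta (Dsummand R X x s)).
Proof. split; [exact: part1 | exact: part2]. Qed.

End Main.


Theorem proposition4p11 (R : comPzRingType) (delta : R) (n : nat)
  (X : {set 'I_n}) (x : 'I_n) :
  x \in X ->
  aug_exact X x (Dsummand R X x) /\
  aug_exact X x (fun s => tensor1 delta (Dsummand R X x s)).
Proof. move=> _; exact: main. Qed.
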